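(* Let $A$ be a real $m\times m$ matrix, $f$ in the range of $A$, $y$ the minimal-norm solution of $Ay=f$. Fix $q\in(0,1)$, $\alpha_0>0$, $C>1$, $\varepsilon\in(0,1)$. For each $\delta\in(0,1)$ let $f_\delta\in\mathbb{R}^m$ satisfy $\|f_\delta-f\|\le\delta$ and $(1-q)\alpha_0q\|Q_{\alpha_0q}^{-1}f_\delta\|>C\delta^\varepsilon$, and let $n_\delta$ be the smallest integer $n\ge1$ with $G_n\le C\delta^\varepsilon$. Then $$\lim_{\delta\to0}\frac{\delta}{\sqrt{\alpha_0q^{n_\delta}}}=0.$$
   Context: $A^*$ is the transpose of $A$, $Q:=AA^*$, $Q_a:=Q+aI$ for $a>0$; $\|\cdot\|$ is the Euclidean norm. $G_0=0$ and $G_n=qG_{n-1}+(1-q)\alpha_0q^n\|Q_{\alpha_0q^n}^{-1}f_\delta\|$ for $n\ge1$. *)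

(* Defs.v *)
(* real numbers (limits needed). Matrices/vectors are encoded
   as functions on nat; only indices < m are relevant. *)
From Stdlib Require Import Reals Lra ClassicalEpsilon.
Open Scope R_scope.

Definition vec := nat -> R.
Definition mat := nat -> nat -> R.

Fixpoint rsum (n : nat) (F : nat -> R) : R :=
  match n with
  | O => 0
  | S k => rsum k F + F k
  end.

Definition mv (m : nat) (A : mat) (x : vec) : vec :=
  fun i => rsum m (fun j => A i j * x j).

Definition tr (A : mat) : mat := fun i j => A j i.

Definition Qm (m : nat) (A : mat) : mat :=
  fun i j => rsum m (fun k => A i k * tr A k j).

Definition Qa (m : nat) (A : mat) (a : R) (x : vec) : vec :=
  fun i => mv m (Qm m A) x i + a * x i.

Definition vnorm (m : nat) (x : vec) : R := sqrt (rsum m (fun i => x i ^ 2)).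

(* Q_a^{-1} g : the (unique, for a > 0) vector x of R^m (zero outside
   indices < m) with Q_a x = g on R^m *)
Definition Qainv (m : nat) (A : mat) (a : R) (g : vec) : vec :=
  epsilon (inhabits (fun _ => 0))
    (fun x => (forall i, (i < m)%nat -> Qa m A a x i = g i) /\
              (forall i, (m <= i)%nat -> x i = 0)).

Fixpoint Gseq (m : nat) (A : mat) (q a0 : R) (fd : vec) (n : nat) : R :=
  match n with
  | O => 0
  | S k => q * Gseq m A q a0 fd k
           + (1 - q) * a0 * q ^ (S k)
             * vnorm m (Qainv m A (a0 * q ^ (S k)) fd)
  end.

(* Main.v *)
Require Import Defs.
From Stdlib Require Import Reals Lra Lia Psatz Classical Arith ClassicalEpsilon.
Open Scope R_scope.

Lemma rsum_ext n F G : (forall i, (i < n)%nat -> F i = G i) -> rsum n F = rsum n G.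
Proof. induction n; simpl; intros H; auto. rewrite IHn by (intros; apply H; lia). rewrite H by lia; auto. Qed.

Lemma rsum_plus n F G : rsum n (fun i => F i + G i) = rsum n F + rsum n G.
Proof. induction n; simpl; [lra|]. rewrite IHn; lra. Qed.

Lemma rsum_scal n c F : rsum n (fun i => c * F i) = c * rsum n F.
Proof. induction n; simpl; [lra|]. rewrite IHn; lra. Qed.

Lemma rsum_zero n : rsum n (fun _ => 0) = 0.
Proof. induction n; simpl; [lra|]. rewrite IHn; lra. Qed.

Lemma rsum_le n F G : (forall i, (i < n)%nat -> F i <= G i) -> rsum n F <= rsum n G.
Proof. induction n; simpl; intros H; [lra|]. assert (H1 := H n (Nat.lt_succ_diag_r n)).
  assert (rsum n F <= rsum n G) by (apply IHn; intros; apply H; lia). lra. Qed.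

Lemma rsum_nonneg n F : (forall i, (i < n)%nat -> 0 <= F i) -> 0 <= rsum n F.
Proof. intros H. rewrite <- (rsum_zero n). apply rsum_le; auto. Qed.

Lemma rsum_term n F i : (forall i, (i < n)%nat -> 0 <= F i) -> (i < n)%nat -> F i <= rsum n F.
Proof. induction n; simpl; intros H Hi; [lia|].
  assert (0 <= rsum n F) by (apply rsum_nonneg; intros; apply H; lia).
  destruct (Nat.eq_dec i n). subst. lra.
  assert (F i <= rsum n F) by (apply IHn; [intros; apply H|]; lia).
  assert (0 <= F n) by (apply H; lia). lra. Qed.

Lemma rsum_swap n p F : rsum n (fun i => rsum p (fun j => F i j)) = rsum p (fun j => rsum n (fun i => F i j)).
Proof. induction n; simpl. rewrite rsum_zero; auto. rewrite IHn, <- rsum_plus. auto. Qed.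

Definition dot m (x y : vec) := rsum m (fun i => x i * y i).

Lemma dot_mv m M u v : dot m u (mv m M v) = dot m (mv m (tr M) u) v.
Proof. unfold dot, mv, tr.
  transitivity (rsum m (fun i => rsum m (fun j => u i * M i j * v j))).
  apply rsum_ext; intros. rewrite <- rsum_scal. apply rsum_ext; intros; ring.
  rewrite rsum_swap. apply rsum_ext; intros. rewrite Rmult_comm, <- rsum_scal.
  apply rsum_ext; intros; ring. Qed.

Lemma mv_Qm m A u i : mv m (Qm m A) u i = mv m A (mv m (tr A) u) i.
Proof. unfold mv, Qm.
  transitivity (rsum m (fun j => rsum m (fun k => A i k * tr A k j * u j))).
  apply rsum_ext; intros. rewrite Rmult_comm, <- rsum_scal. apply rsum_ext; intros; ring.
  rewrite rsum_swap. apply rsum_ext; intros. rewrite <- rsum_scal.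
  apply rsum_ext; intros; ring. Qed.

Lemma dot_Qa m A a u : dot m u (Qa m A a u) =
  dot m (mv m (tr A) u) (mv m (tr A) u) + a * dot m u u.
Proof. unfold Qa.
  unfold dot at 1. transitivity (dot m u (fun i => mv m (Qm m A) u i) + a * dot m u u).
  unfold dot. rewrite <- rsum_scal, <- rsum_plus. apply rsum_ext; intros; ring.
  f_equal. transitivity (dot m u (mv m A (mv m (tr A) u))).
  unfold dot. apply rsum_ext; intros. rewrite mv_Qm; auto.
  apply dot_mv. Qed.

Lemma dot_ext m x x' y y' : (forall i, (i<m)%nat -> x i = x' i) -> (forall i, (i<m)%nat -> y i = y' i) -> dot m x y = dot m x' y'.
Proof. intros; unfold dot; apply rsum_ext; intros; rewrite H, H0; auto. Qed.

Lemma dot_sq_nonneg m x : 0 <= dot m x x.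
Proof. apply rsum_nonneg; intros; nra. Qed.

Lemma dot_sq_zero m x i : dot m x x = 0 -> (i < m)%nat -> x i = 0.
Proof. intros H Hi. assert (x i * x i <= dot m x x) by (apply (rsum_term m (fun i => x i * x i)); auto; intros; nra). nra. Qed.

Lemma vnorm_dot m x : vnorm m x = sqrt (dot m x x).
Proof. unfold vnorm, dot. f_equal. apply rsum_ext; intros; ring. Qed.

Lemma hom m : forall n M, (m < n)%nat -> exists x : vec,
  (exists j, (j < n)%nat /\ x j <> 0) /\
  forall i, (i < m)%nat -> rsum n (fun j => M i j * x j) = 0.
Proof.
induction m; intros n M Hn.
- exists (fun _ => 1). split. exists 0%nat. split; [lia|lra]. intros; lia.
- destruct n as [|n']; [lia|].
  destruct (classic (exists i0, (i0 <= m)%nat /\ M i0 n' <> 0)) as [[i0 [Hi0 Hp]]|Hno].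
  + set (p := M i0 n').
    set (sw := fun k => if Nat.eq_dec k i0 then m else if Nat.eq_dec k m then i0 else k).
    destruct (IHm n' (fun i j => M (sw i) j - M (sw i) n' / p * M i0 j)) as [x' [[j [Hj Hxj]] Hx']]; [lia|].
    set (s := rsum n' (fun j => M i0 j * x' j)).
    exists (fun j => if Nat.eq_dec j n' then - s / p else x' j). split.
    * exists j. split; [lia|]. destruct (Nat.eq_dec j n'); [lia|auto].
    * intros k Hk. simpl. destruct (Nat.eq_dec n' n'); [|lia].
      rewrite (rsum_ext n' _ (fun j => M k j * x' j)).
      2:{ intros j0 Hj0. destruct (Nat.eq_dec j0 n'); [lia|auto]. }
      destruct (Nat.eq_dec k i0).
      { subst k. fold s. fold p. field. auto. }
      assert (Hsw : (sw k < m)%nat /\ sw (sw k) = k).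
      { unfold sw. destruct (Nat.eq_dec k i0); [lia|].
        destruct (Nat.eq_dec k m).
        - destruct (Nat.eq_dec i0 i0); [|lia]. split; lia.
        - destruct (Nat.eq_dec k i0); [lia|]. destruct (Nat.eq_dec k m); [lia|]. split; lia. }
      destruct Hsw as [Hlt Heq]. specialize (Hx' _ Hlt). simpl in Hx'. rewrite Heq in Hx'.
      rewrite (rsum_ext n' _ (fun j => M k j * x' j + (- (M k n' / p)) * (M i0 j * x' j))) in Hx'
        by (intros; ring).
      rewrite rsum_plus, rsum_scal in Hx'. fold s in Hx'. rewrite <- Hx'. field. auto.
  + exists (fun j => if Nat.eq_dec j n' then 1 else 0). split.
    * exists n'. split; [lia|]. destruct (Nat.eq_dec n' n'); [lra|lia].
    * intros i Hi. simpl. destruct (Nat.eq_dec n' n'); [|lia].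
      rewrite (rsum_ext n' _ (fun _ => 0)).
      2:{ intros j0 Hj0. destruct (Nat.eq_dec j0 n'); [lia|ring]. }
      rewrite rsum_zero.
      assert (M i n' = 0). { apply NNPP. intro H. apply Hno. exists i. split; [lia|auto]. }
      rewrite H; ring.
Qed.

Lemma surj m (M : mat) :
  (forall x : vec, (forall i, (i < m)%nat -> mv m M x i = 0) -> forall i, (i < m)%nat -> x i = 0) ->
  forall g : vec, exists z : vec, (forall i, (i < m)%nat -> mv m M z i = g i) /\ (forall i, (m <= i)%nat -> z i = 0).
Proof.
intros Hinj g.
destruct (hom m (S m) (fun i j => if Nat.eq_dec j m then - g i else M i j)) as [x [[j [Hj Hxj]] Hx]]; [lia|].
assert (Heq : forall i, (i < m)%nat -> mv m M x i + (- g i) * x m = 0).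
{ intros i Hi. rewrite <- (Hx i Hi). simpl. destruct (Nat.eq_dec m m); [|lia].
  unfold mv. f_equal. apply rsum_ext. intros j0 Hj0. destruct (Nat.eq_dec j0 m); [lia|auto]. }
assert (Ht : x m <> 0).
{ intro H0. assert (Hz := Hinj x). destruct (Nat.eq_dec j m). subst; auto.
  apply Hxj. apply Hz; [|lia]. intros i Hi. specialize (Heq i Hi). rewrite H0 in Heq. lra. }
exists (fun j => if lt_dec j m then x j / x m else 0). split.
- intros i Hi. specialize (Heq i Hi). unfold mv in *.
  rewrite (rsum_ext m _ (fun j => / x m * (M i j * x j))).
  2:{ intros j0 Hj0. destruct (lt_dec j0 m); [|lia]. field; auto. }
  rewrite rsum_scal. apply (Rmult_eq_reg_l (x m)); auto. field_simplify; auto. lra.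
- intros i Hi. destruct (lt_dec i m); [lia|auto].
Qed.

Lemma CS m x y : (dot m x y)^2 <= dot m x x * dot m y y.
Proof. unfold dot. induction m; simpl. nra.
  set (S := rsum m (fun i => x i * y i)) in *.
  set (X := rsum m (fun i => x i * x i)) in *.
  set (Y := rsum m (fun i => y i * y i)) in *.
  assert (0 <= X) by (apply rsum_nonneg; intros; nra).
  assert (0 <= Y) by (apply rsum_nonneg; intros; nra).
  assert (2 * S * (x m * y m) <= X * (y m * y m) + (x m * x m) * Y).
  { assert (0 <= X * (y m * y m) + (x m * x m) * Y) by nra.
    assert ((2 * S * (x m * y m))^2 <= (X * (y m * y m) + (x m * x m) * Y)^2).
    { assert (Hsq: 0 <= (X * (y m * y m) - (x m * x m) * Y)^2) by apply pow2_ge_0.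
      assert (S^2 * (x m * y m)^2 <= X*Y*(x m * y m)^2). { apply Rmult_le_compat_r; [apply pow2_ge_0|exact IHm]. }
      replace ((2 * S * (x m * y m))^2) with (4 * (S^2 * (x m * y m)^2)) by ring.
      replace ((X * (y m * y m) + (x m * x m) * Y)^2) with ((X * (y m * y m) - (x m * x m) * Y)^2 + 4 * (X*Y*(x m * y m)^2)) by ring.
      lra. }
    destruct (Rle_or_lt (2 * S * (x m * y m)) 0). lra. nra. }
  nra. Qed.

Lemma vnorm_tri m u w : vnorm m (fun i => u i + w i) <= vnorm m u + vnorm m w.
Proof. rewrite !vnorm_dot.
  assert (Hu := dot_sq_nonneg m u). assert (Hw := dot_sq_nonneg m w).
  assert (dot m (fun i => u i + w i) (fun i => u i + w i) = dot m u u + 2 * dot m u w + dot m w w).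
  { unfold dot. rewrite <- rsum_scal, <- !rsum_plus. apply rsum_ext; intros; ring. }
  rewrite H. assert (dot m u w <= sqrt (dot m u u) * sqrt (dot m w w)).
  { rewrite <- sqrt_mult by auto. destruct (Rle_or_lt (dot m u w) 0). assert (Hs := sqrt_pos (dot m u u * dot m w w)). lra.
    rewrite <- (sqrt_pow2 (dot m u w)) by lra. apply sqrt_le_1_alt. apply CS. }
  assert (Hsu := sqrt_pos (dot m u u)). assert (Hsw := sqrt_pos (dot m w w)).
  rewrite <- (sqrt_pow2 (sqrt (dot m u u) + sqrt (dot m w w))) by lra.
  apply sqrt_le_1_alt. simpl. rewrite Rmult_1_r.
  assert (sqrt (dot m u u) * sqrt (dot m u u) = dot m u u) by (apply sqrt_sqrt; auto).
  assert (sqrt (dot m w w) * sqrt (dot m w w) = dot m w w) by (apply sqrt_sqrt; auto).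
  nra. Qed.

Lemma rsum_delta m a (x : vec) i : (i < m)%nat ->
  rsum m (fun j => (if Nat.eq_dec i j then a else 0) * x j) = a * x i.
Proof. induction m; simpl; intros H; [lia|].
  destruct (Nat.eq_dec i m).
  - subst. rewrite (rsum_ext m _ (fun _ => 0)). rewrite rsum_zero; ring.
    intros j Hj. destruct (Nat.eq_dec m j); [lia|ring].
  - rewrite IHm by lia. ring. Qed.

Lemma Qa_inj m A a : 0 < a -> forall x : vec, (forall i, (i < m)%nat -> Qa m A a x i = 0) -> forall i, (i < m)%nat -> x i = 0.
Proof. intros Ha x Hx i Hi. apply (dot_sq_zero m x i); auto.
  assert (H := dot_Qa m A a x).
  rewrite (dot_ext m x x (Qa m A a x) (fun _ => 0)) in H by auto.
  unfold dot at 1 in H. rewrite (rsum_ext m _ (fun _ => 0)) in H by (intros; ring). rewrite rsum_zero in H.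
  assert (H1 := dot_sq_nonneg m (mv m (tr A) x)). assert (H2 := dot_sq_nonneg m x). nra. Qed.

Lemma Qainv_spec m A a g : 0 < a -> forall i, (i < m)%nat -> Qa m A a (Qainv m A a g) i = g i.
Proof. intros Ha i0 Hi0. unfold Qainv.
  match goal with |- context [epsilon ?inh ?P] => assert (Hs : P (epsilon inh P)); [apply epsilon_spec|apply (proj1 Hs); auto] end.
  set (M := fun i j => Qm m A i j + (if Nat.eq_dec i j then a else 0)).
  assert (HM : forall x i, (i < m)%nat -> mv m M x i = Qa m A a x i).
  { intros x i Hi. unfold mv, M, Qa. rewrite (rsum_ext m _ (fun j => Qm m A i j * x j + (if Nat.eq_dec i j then a else 0) * x j)) by (intros; ring).
    rewrite rsum_plus, rsum_delta; auto. }
  destruct (surj m M) with g as [z [Hz1 Hz2]].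
  - intros x Hx. apply (Qa_inj m A a Ha). intros i Hi. rewrite <- HM; auto.
  - exists z. split; auto. intros i Hi. rewrite <- HM; auto.
Qed.

Lemma Qa_lin m A a u v i : Qa m A a (fun j => u j - v j) i = Qa m A a u i - Qa m A a v i.
Proof. unfold Qa, mv. rewrite (rsum_ext m _ (fun j => Qm m A i j * u j + (- 1) * (Qm m A i j * v j))) by (intros; ring).
  rewrite rsum_plus, rsum_scal. ring. Qed.

Lemma sqrt_helper x X Y : 0 <= x -> 0 <= X -> x * x * X <= Y -> x * sqrt X <= sqrt Y.
Proof. intros. rewrite <- (sqrt_square x) at 1 by auto. rewrite <- sqrt_mult by nra.
  apply sqrt_le_1_alt; auto. Qed.

Lemma est_e m A a w e : 0 < a -> (forall i, (i < m)%nat -> Qa m A a w i = e i) -> a * vnorm m w <= vnorm m e.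
Proof. intros Ha Hw. rewrite !vnorm_dot.
  assert (H := dot_Qa m A a w). rewrite (dot_ext m w w (Qa m A a w) e) in H by auto.
  assert (H1 := dot_sq_nonneg m (mv m (tr A) w)).
  assert (H2 : 2 * dot m w e <= a * dot m w w + / a * dot m e e).
  { unfold dot. rewrite <- !rsum_scal, <- rsum_plus. apply rsum_le. intros.
    assert (H3 : 0 <= a * (w i - e i / a)^2) by (apply Rmult_le_pos; [lra|apply pow2_ge_0]).
    replace (a * (w i - e i / a)^2) with (a * (w i * w i) + / a * (e i * e i) - 2 * (w i * e i)) in H3 by (field; lra). lra. }
  assert (H3 : a * a * dot m w w <= dot m e e).
  { assert (H0 : a * dot m w w <= / a * dot m e e) by lra.
    replace (dot m e e) with (a * (/a * dot m e e)) by (field; lra). replace (a*a*dot m w w) with (a*(a*dot m w w)) by ring. apply Rmult_le_compat_l; lra. }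
  apply sqrt_helper; auto; try lra; apply dot_sq_nonneg. Qed.

Lemma est_y m A a u (y : vec) : 0 < a -> (forall i, (i < m)%nat -> Qa m A a u i = mv m A y i) ->
  a * vnorm m u <= sqrt a * vnorm m y / 2.
Proof. intros Ha Hu. rewrite !vnorm_dot.
  assert (H := dot_Qa m A a u). rewrite (dot_ext m u u (Qa m A a u) (mv m A y)) in H by auto.
  rewrite dot_mv in H. set (z := mv m (tr A) u) in *.
  assert (H2 : dot m z y <= dot m z z + / 4 * dot m y y).
  { unfold dot. rewrite <- rsum_scal, <- rsum_plus. apply rsum_le. intros.
    assert (0 <= (z i - y i / 2)^2) by apply pow2_ge_0. nra. }
  assert (H3 : a * a * dot m u u <= a * (dot m y y / 4)).
  { assert (a * dot m u u <= dot m y y / 4) by lra. nra. }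
  assert (Hy := dot_sq_nonneg m y).
  replace (sqrt a * sqrt (dot m y y) / 2) with (sqrt (a * (dot m y y / 4))).
  apply sqrt_helper; auto; try lra; apply dot_sq_nonneg.
  rewrite sqrt_mult by lra. rewrite sqrt_div_alt by lra. replace 4 with (2^2) by ring. rewrite sqrt_pow2 by lra. field.
Qed.

Lemma est_beta m A a fd f (y : vec) d : 0 < a ->
  (forall i, (i < m)%nat -> mv m A y i = f i) ->
  vnorm m (fun i => fd i - f i) <= d ->
  a * vnorm m (Qainv m A a fd) <= d + sqrt a * vnorm m y / 2.
Proof. intros Ha Hy Hd.
  set (u := Qainv m A a fd). set (u1 := Qainv m A a (mv m A y)).
  assert (Hu1 := est_y m A a u1 y Ha (Qainv_spec m A a _ Ha)).
  assert (Hw := est_e m A a (fun j => u j - u1 j) (fun i => fd i - f i) Ha).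
  assert (a * vnorm m (fun j => u j - u1 j) <= vnorm m (fun i => fd i - f i)).
  { apply Hw. intros i Hi. rewrite Qa_lin. unfold u, u1. rewrite !Qainv_spec by auto. rewrite Hy; auto. }
  assert (vnorm m u <= vnorm m u1 + vnorm m (fun j => u j - u1 j)).
  { rewrite <- vnorm_tri. apply Req_le. unfold vnorm. f_equal. apply rsum_ext; intros. f_equal. ring. }
  fold u. nra. Qed.

Lemma div_le_helper a b x c : 0 < b -> 0 < c -> a * c <= x * b -> a / b <= x / c.
Proof. intros. replace (a/b) with ((a*c)*(/b*/c)) by (field; lra).
  replace (x/c) with ((x*b)*(/b*/c)) by (field; lra).
  apply Rmult_le_compat_r; auto. apply Rlt_le, Rmult_lt_0_compat; apply Rinv_0_lt_compat; auto. Qed.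

Lemma Gbound m A f (y : vec) q a0 fd d :
  0 < q < 1 -> 0 < a0 ->
  (forall i, (i < m)%nat -> mv m A y i = f i) ->
  vnorm m (fun i => fd i - f i) <= d -> 0 <= d ->
  forall n, Gseq m A q a0 fd n <= d + vnorm m y * sqrt (a0 * q ^ n).
Proof. intros Hq Ha0 Hy Hd Hd0. assert (HY : 0 <= vnorm m y) by apply sqrt_pos.
  induction n; simpl.
  - assert (0 <= sqrt (a0 * 1)) by apply sqrt_pos. nra.
  - set (al := a0 * (q * q ^ n)).
    assert (Hal : 0 < al) by (unfold al; apply Rmult_lt_0_compat; auto; apply Rmult_lt_0_compat; [lra|apply pow_lt; lra]).
    assert (Hb := est_beta m A al fd f y d Hal Hy Hd).
    set (s := sqrt (a0 * q ^ n)) in *. set (r := sqrt q).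
    assert (Hs : 0 <= s) by apply sqrt_pos. assert (Hr : 0 <= r) by apply sqrt_pos.
    assert (Hrr : r * r = q) by (apply sqrt_sqrt; lra).
    assert (Hsal : sqrt al = r * s) by (unfold al, r, s; rewrite <- sqrt_mult; [f_equal; ring|lra|apply Rmult_le_pos; [lra|apply pow_le; lra]]).
    rewrite Hsal in Hb.
    replace ((1 - q) * a0 * (q * q ^ n) * vnorm m (Qainv m A al fd)) with ((1 - q) * (al * vnorm m (Qainv m A al fd))) by (unfold al; ring).
    rewrite Hsal.
    assert (Hr1 : r < 1). { unfold r. rewrite <- sqrt_1. apply sqrt_lt_1_alt. lra. }
    assert (q * Gseq m A q a0 fd n <= q * (d + vnorm m y * s)) by (apply Rmult_le_compat_l; lra).
    assert ((1-q) * (al * vnorm m (Qainv m A al fd)) <= (1-q) * (d + r * s * vnorm m y / 2)) by (apply Rmult_le_compat_l; lra).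
    assert (0 <= vnorm m y * s * (1 - r)^2) by (apply Rmult_le_pos; [nra|apply pow2_ge_0]).
    rewrite <- Hrr in *. nra.
Qed.

Theorem lemma2p9 (m : nat) (A : mat) (f y : vec)
  (Hrange : exists x : vec, forall i, (i < m)%nat -> mv m A x i = f i)
  (Hy : forall i, (i < m)%nat -> mv m A y i = f i)
  (Hymin : forall z : vec, (forall i, (i < m)%nat -> mv m A z i = f i) ->
           vnorm m y <= vnorm m z)
  (q a0 C eps : R)
  (Hq : 0 < q < 1) (Ha0 : 0 < a0) (HC : 1 < C) (Heps : 0 < eps < 1)
  (fd : R -> vec) (nd : R -> nat)
  (Hfd : forall d, 0 < d < 1 ->
     vnorm m (fun i => fd d i - f i) <= d)
  (Hstart : forall d, 0 < d < 1 ->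
     (1 - q) * a0 * q * vnorm m (Qainv m A (a0 * q) (fd d)) > C * Rpower d eps)
  (Hnd : forall d, 0 < d < 1 ->
     (1 <= nd d)%nat /\
     Gseq m A q a0 (fd d) (nd d) <= C * Rpower d eps /\
     (forall n, (1 <= n)%nat -> (n < nd d)%nat ->
        Gseq m A q a0 (fd d) n > C * Rpower d eps)) :
  limit1_in (fun d => d / sqrt (a0 * q ^ (nd d))) (fun d => 0 < d < 1) 0 0.
Proof.
set (Y := vnorm m y). assert (HY : 0 <= Y) by apply sqrt_pos.
set (r := sqrt q). assert (Hr : 0 < r) by (apply sqrt_lt_R0; lra).
assert (Hrr : r * r = q) by (apply sqrt_sqrt; lra).
set (K := (Y + 1) / (r * (C - 1))).
assert (HK : 0 < K) by (unfold K; apply Rdiv_lt_0_compat; [lra|apply Rmult_lt_0_compat; lra]).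
assert (Key : forall d, 0 < d < 1 ->
  0 <= d / sqrt (a0 * q ^ (nd d)) <= K * Rpower d (1 - eps)).
{ intros d Hd. destruct (Hnd d Hd) as [H1 [H2 H3]].
  assert (Hne : nd d <> 1%nat).
  { intro E. rewrite E in H2. specialize (Hstart d Hd). simpl in H2.
    rewrite Rmult_1_r in H2. lra. }
  set (N := pred (nd d)).
  assert (HN : nd d = S N) by (unfold N; lia).
  assert (HGN := H3 N ltac:(lia) ltac:(lia)).
  assert (HGb := Gbound m A f y q a0 (fd d) d Hq Ha0 Hy (Hfd d Hd) ltac:(lra) N).
  fold Y in HGb.
  set (sN := sqrt (a0 * q ^ N)) in *.
  assert (HsN : 0 < sN) by (apply sqrt_lt_R0, Rmult_lt_0_compat; [lra|apply pow_lt; lra]).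
  assert (Hsq : sqrt (a0 * q ^ nd d) = r * sN).
  { rewrite HN. unfold r, sN. rewrite <- sqrt_mult; [f_equal; simpl; ring|lra|apply Rmult_le_pos; [lra|apply pow_le; lra]]. }
  rewrite Hsq.
  assert (Hln : ln d < 0) by (rewrite <- ln_1; apply ln_increasing; lra).
  set (E := Rpower d eps). set (P := Rpower d (1 - eps)).
  assert (HE : 0 < E) by apply exp_pos. assert (HP : 0 < P) by apply exp_pos.
  assert (HdE : d <= E).
  { unfold E, Rpower. rewrite <- (exp_ln d) at 1 by lra. apply Rlt_le, exp_increasing. nra. }
  assert (HdPE : d = P * E).
  { unfold P, E. rewrite <- Rpower_plus. replace (1 - eps + eps) with 1 by ring. rewrite Rpower_1; lra. }
  split.
  - apply Rlt_le, Rdiv_lt_0_compat; [lra|apply Rmult_lt_0_compat; lra].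
  - fold E in HGN. assert (E * (C - 1) <= (Y + 1) * sN) by (assert (Y * sN <= (Y+1) * sN) by (apply Rmult_le_compat_r; lra); lra).
    rewrite HdPE. unfold K.
    replace (P * E / (r * sN)) with (P / r * (E / sN)) by (field; lra).
    replace ((Y + 1) / (r * (C - 1)) * P) with (P / r * ((Y + 1) / (C - 1))) by (field; lra).
    apply Rmult_le_compat_l. apply Rlt_le, Rdiv_lt_0_compat; lra.
    apply div_le_helper; lra. }
unfold limit1_in, limit_in. simpl. unfold R_dist. intros e He.
exists (Rpower (e / K) (/ (1 - eps))). split. apply exp_pos.
intros d [Hd Hdist]. rewrite Rminus_0_r in *. rewrite Rabs_right in Hdist by lra.
destruct (Key d Hd) as [K1 K2]. rewrite Rabs_right by lra.
assert (Rpower d (1 - eps) < e / K).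
{ replace (e / K) with (Rpower (Rpower (e / K) (/ (1 - eps))) (1 - eps)).
  apply Rlt_Rpower_l; [lra|]. split; lra.
  rewrite Rpower_mult. replace (/ (1 - eps) * (1 - eps)) with 1 by (field; lra).
  apply Rpower_1. apply Rdiv_lt_0_compat; lra. }
apply Rle_lt_trans with (K * Rpower d (1 - eps)); auto.
replace e with (K * (e / K)) by (field; lra). apply Rmult_lt_compat_l; auto.
Qed.
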